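(* Let $\Lambda_2,\Lambda_3,\Lambda_4\in\mathbb C$, $\Lambda_4\neq0$, and let $\mathcal V^{[2]}$, $v_\lambda$, $\widetilde L_n$, $\widetilde{\mathbf L}_\mu$, $\deg_\delta$ be as in the context. Let $\delta=1$, or $\delta=2$ under the additional assumption $\Lambda_3=0$. Then for all partitions $\lambda,\mu$: (a) if $j\ge1$ and $\widetilde L_{2+j}v_\lambda\ne0$, then $\deg_\delta\big(\widetilde L_{2+j}v_\lambda\big)\le\deg_\delta v_\lambda-\deg_\delta L_{2-j}$; (b) if $\deg_\delta v_\mu>\deg_\delta v_\lambda$, then $\widetilde{\mathbf L}_\mu v_\lambda=0$.
   Context: $\mathcal V^{[2]}$ is the Virasoro Whittaker module generated by $|J\rangle$ with $L_n|J\rangle=\Lambda_n|J\rangle$ ($n=2,3,4$), $L_n|J\rangle=0$ ($n>4$). Basis $v_\lambda=\mathbf L_{-\lambda}|J\rangle$, $\mathbf L_{-\lambda}=L_{-\lambda_1+2}\cdots L_{-\lambda_\ell+2}$ for partitions $\lambda=(\lambda_1\ge\dots\ge\lambda_\ell\ge1)$, $v_\emptyset=|J\rangle$. $\widetilde L_n=L_n-\Lambda_n$ for $n=3,4$, $\widetilde L_n=L_n$ for $n>4$; $\widetilde{\mathbf L}_\mu=\widetilde L_{\mu_1+2}\cdots\widetilde L_{\mu_m+2}$. Degrees: $\deg_\delta L_{-k}=k$ ($k>0$), $\deg_\delta L_0=\delta$, $\deg_\delta L_1=1$, so that for $\lambda=(\cdots3^{n_3}2^{n_2}1^{n_1})$,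 $\deg_\delta v_\lambda=n_1+\delta n_2+\sum_{k>2}n_k(k-2)$; the degree of a nonzero vector $v=\sum c_\lambda v_\lambda$ is the maximum of $\deg_\delta v_\lambda$ over $\lambda$ with $c_\lambda\neq0$. *)

(* Defs.v *)
From HB Require Import structures.
From mathcomp Require Import all_boot all_order all_algebra.
From mathcomp Require Import complex.
From mathcomp Require Import reals Rstruct.
Set Implicit Arguments. Unset Strict Implicit. Unset Printing Implicit Defensive.
Import Order.TTheory GRing.Theory Num.Theory.
Local Open Scope ring_scope.

Definition CC : Type := complex Rdefinitions.R.

Definition is_partition (s : seq nat) : bool :=
  sorted (fun a b => b <= a)%N s && all (fun k => 0 < k)%N s.

Definition vlam (V : Type) (L : int -> V -> V) (J : V) (lam : seq nat) : V :=
  foldr (fun k w => L (2%:Z - k%:Z) w) J lam.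

(* deg_delta of L_{2-k} for a part k >= 1:
   k = 1 (L_1) -> 1;  k = 2 (L_0) -> delta;  k > 2 (L_{-(k-2)}) -> k - 2 *)
Definition partdeg (delta : nat) (k : nat) : int :=
  if k == 1%N then 1 else if k == 2%N then delta%:Z else k%:Z - 2.

Definition degp (delta : nat) (lam : seq nat) : int :=
  \sum_(k <- lam) partdeg delta k.

Definition Lam_shift (L3 L4 : CC) (n : nat) : CC :=
  if n == 3%N then L3 else if n == 4%N then L4 else 0.

Definition Ltil (V : lmodType CC) (L : int -> V -> V) (L3 L4 : CC)
  (n : nat) (v : V) : V :=
  L n%:Z v - Lam_shift L3 L4 n *: v.

Definition Ltilmu (V : lmodType CC) (L : int -> V -> V) (L3 L4 : CC)
  (mu : seq nat) (v : V) : V :=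
  foldr (fun k w => Ltil L L3 L4 (k + 2)%N w) v mu.

Definition expand (V : lmodType CC) (L : int -> V -> V) (J : V)
  (s : seq (seq nat)) (c : seq nat -> CC) : V :=
  \sum_(lam <- s) c lam *: vlam L J lam.

Definition vlam_basis (V : lmodType CC) (L : int -> V -> V) (J : V) : Prop :=
  (forall v : V, exists (s : seq (seq nat)) (c : seq nat -> CC),
      [/\ uniq s, all is_partition s & v = expand L J s c]) /\
  (forall (s : seq (seq nat)) (c : seq nat -> CC),
      uniq s -> all is_partition s -> expand L J s c = 0 ->
      forall lam, lam \in s -> c lam = 0).

Definition deg_le (V : lmodType CC) (L : int -> V -> V) (J : V)
  (delta : nat) (v : V) (d : int) : Prop :=
  forall (s : seq (seq nat)) (c : seq nat -> CC),
    uniq s -> all is_partition s -> v = expand L J s c ->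
    forall lam, lam \in s -> c lam != 0 -> degp delta lam <= d.

Definition virasoro_rel (V : lmodType CC) (L : int -> V -> V) (cc : CC) : Prop :=
  forall (m n : int) (v : V),
    L m (L n v) - L n (L m v) =
    (m - n)%:~R *: L (m + n) v
    + (if m + n == 0 then cc / 12%:R * (m ^+ 3 - m)%:~R else 0) *: v.

Definition whittaker2 (V : lmodType CC) (L : int -> V -> V) (J : V)
  (L2 L3 L4 : CC) : Prop :=
  [/\ L 2 J = L2 *: J, L 3 J = L3 *: J, L 4 J = L4 *: J
    & forall n : int, 4 < n -> L n J = 0].

(* Main.v *)
Require Import Defs.
From HB Require Import structures.
From mathcomp Require Import all_boot all_order all_algebra.
From mathcomp Require Import complex.
From mathcomp Require Import reals Rstruct.
From mathcomp Require Import zify.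
Set Implicit Arguments. Unset Strict Implicit. Unset Printing Implicit Defensive.
Import Order.TTheory GRing.Theory Num.Theory.
Local Open Scope ring_scope.

Lemma pd_ge0 delta k : (0 < k)%N -> 0 <= partdeg delta k.
Proof. rewrite /partdeg; do ! case: eqP => ?; lia. Qed.

Lemma pd_sub delta k m : (1 <= delta <= 2)%N -> (0 < k)%N -> (0 < m)%N -> (3 <= k + m)%N ->
  partdeg delta (k + m - 2) <= partdeg delta k + partdeg delta m.
Proof. move=> hd hk hm hkm; rewrite /partdeg; do ! case: eqP => ?; lia. Qed.

Lemma degp_ge0 delta s : all (fun k => 0 < k)%N s -> 0 <= degp delta s.
Proof.
elim: s => [|k s IH] /=; first by rewrite /degp big_nil.
by case/andP=> hk hs; rewrite /degp big_cons addr_ge0 ?pd_ge0 ?IH.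
Qed.

Lemma degp_cons delta k s : degp delta (k :: s) = partdeg delta k + degp delta s.
Proof. by rewrite /degp big_cons. Qed.

Lemma degp_cat delta s t : degp delta (s ++ t) = degp delta s + degp delta t.
Proof. by rewrite /degp big_cat. Qed.

Definition spanF (V : lmodType CC) (Lf : int -> V -> V) (J : V) (delta : nat)
  (d : int) (v : V) : Prop :=
  exists ps : seq (seq nat * CC),
    all (fun p => is_partition p.1 && (degp delta p.1 <= d)) ps /\
    v = \sum_(p <- ps) p.2 *: vlam Lf J p.1.

Lemma spanF0 V Lf J delta d : @spanF V Lf J delta d 0.
Proof. by exists [::]; rewrite big_nil. Qed.

Lemma spanFD V Lf J delta d u w :
  @spanF V Lf J delta d u -> spanF Lf J delta d w -> spanF Lf J delta d (u + w).
Proof.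
move=> [ps1 [h1 ->]] [ps2 [h2 ->]]; exists (ps1 ++ ps2).
by rewrite all_cat h1 h2 big_cat.
Qed.

Lemma spanFZ V Lf J delta d a u :
  @spanF V Lf J delta d u -> spanF Lf J delta d (a *: u).
Proof.
move=> [ps [h ->]]; exists [seq (p.1, a * p.2) | p <- ps]; split.
  by rewrite all_map; apply: sub_all h => p.
by rewrite big_map scaler_sumr; apply: eq_bigr => p _; rewrite scalerA.
Qed.

Lemma spanF_le V Lf J delta d d' v : d <= d' ->
  @spanF V Lf J delta d v -> spanF Lf J delta d' v.
Proof.
move=> hd [ps [h ->]]; exists ps; split=> //.
apply: sub_all h => p /andP[-> /= h]; exact: le_trans h hd.
Qed.

Lemma spanF_sum (V : lmodType CC) Lf J delta d (I : eqType) (r : seq I) (F : I -> V) :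
  (forall i, i \in r -> spanF Lf J delta d (F i)) ->
  spanF Lf J delta d (\sum_(i <- r) F i).
Proof.
elim: r => [|i r IH] h; first by rewrite big_nil; exact: spanF0.
rewrite big_cons; apply: spanFD; first by apply: h; rewrite mem_head.
by apply: IH => j hj; apply: h; rewrite inE hj orbT.
Qed.

Lemma spanF_vlam V Lf J delta lam : is_partition lam ->
  @spanF V Lf J delta (degp delta lam) (vlam Lf J lam).
Proof.
move=> h; exists [:: (lam, 1)]; split; first by rewrite /= h lexx.
by rewrite big_seq1 scale1r.
Qed.

Lemma spanF_neg V Lf J delta d v : d < 0 -> @spanF V Lf J delta d v -> v = 0.
Proof.
move=> hd [[|p ps] [h ->]]; first by rewrite big_nil.
move: h => /= /andP[/andP[hp hdeg] _]; exfalso.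
move: hp => /andP[_ hpos]; have := degp_ge0 delta hpos.
move=> h0; have := le_lt_trans h0 (le_lt_trans hdeg hd); by rewrite ltxx.
Qed.

Lemma sum_pred1_uniq (T : eqType) (V : zmodType) (r : seq T) (x : T) (F : T -> V) :
  uniq r -> x \in r -> \sum_(y <- r | y == x) F y = F x.
Proof. by move=> hu hx; rewrite -big_filter filter_pred1_uniq // big_seq1. Qed.

Lemma regroup (V : lmodType CC) (Lf : int -> V -> V) (J : V) (qs : seq (seq nat * CC)) (r : seq (seq nat)) :
  uniq r -> {subset map fst qs <= r} ->
  \sum_(p <- qs) p.2 *: vlam Lf J p.1 =
  \sum_(x <- r) (\sum_(p <- qs | p.1 == x) p.2) *: vlam Lf J x.
Proof.
move=> hu hsub; symmetry.
rewrite (eq_bigr (fun x => \sum_(p <- qs) (if p.1 == x then p.2 *: vlam Lf J p.1 else 0))); last first.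
  move=> x _; rewrite scaler_suml big_mkcond; apply: eq_bigr => p _.
  by case: eqP => [->|]; rewrite ?scale0r.
rewrite exchange_big /=; apply: eq_big_seq => p hp.
rewrite -big_mkcond /=.
rewrite (eq_bigl (fun x => x == p.1)); last by move=> x; rewrite eq_sym.
apply: sum_pred1_uniq => //; apply: hsub; exact: map_f.
Qed.

Lemma deg_le_of_spanF (V : lmodType CC) (Lf : int -> V -> V) (J : V) delta d v :
  (forall s c, uniq s -> all is_partition s -> expand Lf J s c = 0 ->
     forall lam, lam \in s -> c lam = 0) ->
  spanF Lf J delta d v -> deg_le Lf J delta v d.
Proof.
move=> hind [ps [hps ->]] s c hu hs hv lam hlam hc.
set r := undup (s ++ map fst ps).
set qs0 := [seq (x, c x) | x <- s].
have e1 : expand Lf J s c =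
    \sum_(x <- r) (\sum_(p <- qs0 | p.1 == x) p.2) *: vlam Lf J x.
  rewrite -regroup; first by rewrite /expand big_map.
    exact: undup_uniq.
  by move=> x /mapP[p /mapP[y hy ->] ->]; rewrite mem_undup mem_cat hy.
have e2 : \sum_(p <- ps) p.2 *: vlam Lf J p.1 =
    \sum_(x <- r) (\sum_(p <- ps | p.1 == x) p.2) *: vlam Lf J x.
  by apply: regroup; rewrite ?undup_uniq // => x hx; rewrite mem_undup mem_cat hx orbT.
have h0 : expand Lf J r (fun x => \sum_(p <- qs0 | p.1 == x) p.2
                               - \sum_(p <- ps | p.1 == x) p.2) = 0.
  rewrite /expand; under eq_bigr do rewrite scalerBl.
  by rewrite sumrB -e1 -e2 hv subrr.
have hr : all is_partition r.
  apply/allP => x; rewrite mem_undup mem_cat => /orP[hx|/mapP[p hp ->]].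
    exact: (allP hs).
  by case/andP: (allP hps p hp).
have hlr : lam \in r by rewrite mem_undup mem_cat hlam.
have := hind r _ (undup_uniq _) hr h0 lam hlr.
rewrite big_map /= sum_pred1_uniq // => /eqP; rewrite subr_eq0 => /eqP hcl.
have : has (fun p : seq nat * CC => p.1 == lam) ps.
  apply/negPn/negP => hn; move: hc; rewrite hcl big_hasC //; by rewrite eqxx.
case/hasP=> p hp /eqP <-; by case/andP: (allP hps p hp).
Qed.

Lemma vlam_cons (V : Type) (Lf : int -> V -> V) J k s :
  vlam Lf J (k :: s) = Lf (2%:Z - k%:Z) (vlam Lf J s).
Proof. by []. Qed.

Lemma vlam_cat (V : Type) (Lf : int -> V -> V) J a t :
  vlam Lf J (a ++ t) = vlam Lf (vlam Lf J t) a.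
Proof. by rewrite /vlam foldr_cat. Qed.

Lemma vlamD (V : lmodType CC) (L : int -> {linear V -> V}) x y a :
  vlam (fun n => L n : V -> V) (x + y) a =
  vlam (fun n => L n : V -> V) x a + vlam (fun n => L n : V -> V) y a.
Proof. by elim: a => [|k a IH] //; rewrite !vlam_cons IH linearD. Qed.

Lemma vlamZ (V : lmodType CC) (L : int -> {linear V -> V}) (c : CC) x a :
  vlam (fun n => L n : V -> V) (c *: x) a = c *: vlam (fun n => L n : V -> V) x a.
Proof. by elim: a => [|k a IH] //; rewrite !vlam_cons IH linearZ. Qed.

Lemma swap_lem (V : lmodType CC) (L : int -> {linear V -> V}) cc J
  (hvir : virasoro_rel (fun n => L n : V -> V) cc) a b k m :
  (0 < k)%N -> (k < m)%N -> exists c : CC,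
  vlam (fun n => L n : V -> V) J (a ++ k :: m :: b) =
  vlam (fun n => L n : V -> V) J (a ++ m :: k :: b) +
  c *: vlam (fun n => L n : V -> V) J (a ++ (k + m - 2)%N :: b).
Proof.
move=> hk hkm.
rewrite !vlam_cat !vlam_cons.
set w := vlam _ J b.
have h := hvir (2%:Z - k%:Z) (2%:Z - m%:Z) w.
move/eqP: h; rewrite subr_eq => /eqP ->.
have -> : (if (2%:Z - k%:Z) + (2%:Z - m%:Z) == 0
   then cc / 12%:R * (((2%:Z - k%:Z) ^+ 3 - (2%:Z - k%:Z))%:~R) else 0) = 0.
  case: ifP => // /eqP h0.
  have -> : (2%:Z - k%:Z) = 1 by lia.
  by rewrite expr1n subrr mulr0.
rewrite scale0r addr0 vlamD vlamZ.
have -> : (2%:Z - k%:Z) + (2%:Z - m%:Z) = 2%:Z - (k + m - 2)%N%:Z by lia.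
by eexists; rewrite addrC.
Qed.

Fixpoint pot (s : seq nat) : nat :=
  if s is x :: t then (pot t + sumn t)%N else 0%N.

Lemma pot_swap a b k m : (k < m)%N -> (pot (a ++ m :: k :: b) < pot (a ++ k :: m :: b))%N.
Proof.
move=> hkm; elim: a => [|x a IH] /=; first lia.
rewrite !sumn_cat /=; lia.
Qed.

Lemma unsorted_split (s : seq nat) : ~~ sorted (fun a b => b <= a)%N s ->
  exists a k m b, s = a ++ k :: m :: b /\ (k < m)%N.
Proof.
elim: s => [|x t IH] //=; case: t IH => [|y t] IH //=.
case: (leqP y x) => hxy /=.
  move=> /IH [a [k [m [b [-> h]]]]]; by exists (x :: a), k, m, b.
by move=> _; exists [::], x, y, t.
Qed.

Lemma reorder (V : lmodType CC) (L : int -> {linear V -> V}) cc J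
  (hvir : virasoro_rel (fun n => L n : V -> V) cc) delta :
  (1 <= delta <= 2)%N ->
  forall s, all (fun k => 0 < k)%N s ->
  spanF (fun n => L n : V -> V) J delta (degp delta s) (vlam (fun n => L n : V -> V) J s).
Proof.
move=> hd s hs.
suff H : forall n p s, (size s < n)%N -> (pot s < p)%N -> all (fun k => 0 < k)%N s ->
  spanF (fun n => L n : V -> V) J delta (degp delta s) (vlam (fun n => L n : V -> V) J s).
  exact: (H (size s).+1 (pot s).+1).
elim=> [|n IHn] p //; elim: p => [|p IHp] t //.
move=> hsz hpot ht.
case: (boolP (sorted (fun a b => b <= a)%N t)) => hsort.
  by apply: spanF_vlam; rewrite /is_partition hsort ht.
have [a [k [m [b [ht' hkm]]]]] := unsorted_split hsort.
subst t.
move: ht; rewrite all_cat => /andP[ha] /= /and3P[hk0 hm0 hb].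
have [c ->] := swap_lem J hvir a b hk0 hkm.
apply: spanFD.
  have -> : degp delta (a ++ [:: k, m & b]) = degp delta (a ++ [:: m, k & b]).
    by rewrite !degp_cat !degp_cons; lia.
  apply: IHp.
  - by move: hsz; rewrite !size_cat.
  - by have := pot_swap a b hkm; lia.
  - by rewrite all_cat /= ha hb hk0 hm0.
apply: spanFZ.
apply: (@spanF_le _ _ _ _ (degp delta (a ++ (k + m - 2)%N :: b))).
  rewrite !degp_cat !degp_cons lerD2l addrA lerD2r.
  apply: pd_sub => //; lia.
apply: (IHn (pot (a ++ (k + m - 2)%N :: b)).+1).
- by move: hsz; rewrite !size_cat /=; lia.
- by [].
- rewrite all_cat /= ha hb andbT /=; lia.
Qed.

Lemma Lup (V : lmodType CC) (L : int -> {linear V -> V}) cc J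
  (hvir : virasoro_rel (fun n => L n : V -> V) cc) delta d v k :
  (1 <= delta <= 2)%N -> (0 < k)%N ->
  spanF (fun n => L n : V -> V) J delta d v ->
  spanF (fun n => L n : V -> V) J delta (d + partdeg delta k) (L (2%:Z - k%:Z) v).
Proof.
move=> hd hk [ps [hps ->]]; rewrite linear_sum; apply: spanF_sum => p hp.
rewrite linearZ; apply: spanFZ.
have -> : L (2%:Z - k%:Z) (vlam (fun n => L n : V -> V) J p.1) =
  vlam (fun n => L n : V -> V) J (k :: p.1) by [].
have /andP[/andP[_ hpos] hdeg] := allP hps p hp.
apply: spanF_le (reorder J hvir hd _); last by rewrite /= hk.
by rewrite degp_cons addrC lerD2r.
Qed.

Lemma comm_decomp (V : lmodType CC) (L : int -> {linear V -> V}) cc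
  (hvir : virasoro_rel (fun n => L n : V -> V) cc) L3 L4 (j k : nat) (w : V) :
  Ltil (fun n => L n : V -> V) L3 L4 (2 + j) (L (2%:Z - k%:Z) w) =
  L (2%:Z - k%:Z) (Ltil (fun n => L n : V -> V) L3 L4 (2 + j) w) +
  ((((2 + j)%N%:Z - (2%:Z - k%:Z))%:~R : CC) *: L ((2 + j)%N%:Z + (2%:Z - k%:Z)) w +
   (if (2 + j)%N%:Z + (2%:Z - k%:Z) == 0
    then cc / 12%:R * ((((2 + j)%N%:Z) ^+ 3 - (2 + j)%N%:Z)%:~R) else 0) *: w).
Proof.
rewrite /Ltil linearB linearZ /=.
have h := hvir (2 + j)%N%:Z (2%:Z - k%:Z) w.
move/eqP: h; rewrite subr_eq => /eqP ->.
by rewrite linearZ scalerN [RHS]addrC !addrA.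
Qed.

Definition qd (delta j : nat) : int := if j == 0%N then 0 else partdeg delta j.

Lemma mainC (V : lmodType CC) (L : int -> {linear V -> V}) cc J L2 L3 L4
  (hvir : virasoro_rel (fun n => L n : V -> V) cc)
  (hwh : whittaker2 (fun n => L n : V -> V) J L2 L3 L4) delta
  (hd : (1 <= delta <= 2)%N) (h3 : delta = 2%N -> L3 = 0) :
  forall lam, all (fun k => 0 < k)%N lam -> forall j,
  spanF (fun n => L n : V -> V) J delta (degp delta lam - qd delta j)
    (Ltil (fun n => L n : V -> V) L3 L4 (2 + j) (vlam (fun n => L n : V -> V) J lam)).
Proof.
case: hwh => hw2 hw3 hw4 hw5.
elim=> [|k lam IH].
  move=> _ j; rewrite /Ltil /Lam_shift.
  case: j => [|[|[|j]]] /=.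
  - rewrite hw2 scale0r !subr0; apply: spanFZ.
    apply: (spanF_le _ (spanF_vlam _ J delta (isT : is_partition [::]))).
    by rewrite /qd /degp big_nil.
  - by rewrite hw3 subrr; apply: spanF0.
  - by rewrite hw4 subrr; apply: spanF0.
  - rewrite hw5; last by [].
    by rewrite scale0r subr0; apply: spanF0.
move=> /andP[hk hlam] j.
have -> : vlam (fun n => L n : V -> V) J (k :: lam) =
  L (2%:Z - k%:Z) (vlam (fun n => L n : V -> V) J lam) by [].
rewrite (comm_decomp hvir).
set w := vlam _ J lam.
have hw : spanF (fun n => L n : V -> V) J delta (degp delta lam) w.
  exact: reorder.
apply: spanFD.
  apply: (spanF_le _ (Lup hvir hd hk (IH hlam j))).
  by rewrite degp_cons; lia.
apply: spanFD.
  apply: spanFZ; case: (leqP k (j + 2)) => hkj.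
    have -> : (2 + j)%N%:Z + (2%:Z - k%:Z) = (2 + (j + 2 - k))%N%:Z by lia.
    have -> : L (2 + (j + 2 - k))%N%:Z w =
      Ltil (fun n => L n : V -> V) L3 L4 (2 + (j + 2 - k))%N w +
      Lam_shift L3 L4 (2 + (j + 2 - k))%N *: w by rewrite /Ltil subrK.
    apply: spanFD.
      apply: (spanF_le _ (IH hlam (j + 2 - k)%N)).
      rewrite degp_cons /qd /partdeg; do ! case: eqP => ?; lia.
    rewrite /Lam_shift; case: eqP => h1.
      have [->|hL3] := eqVneq L3 0; first by rewrite scale0r; apply: spanF0.
      have hd1 : delta = 1%N.
        case: (delta =P 2%N) => [/h3 /eqP|]; first by rewrite (negbTE hL3).
        lia.
      apply: spanFZ; apply: (spanF_le _ hw).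
      rewrite degp_cons /qd /partdeg; do ! case: eqP => ?; lia.
    case: eqP => h2.
      apply: spanFZ; apply: (spanF_le _ hw).
      rewrite degp_cons /qd /partdeg; do ! case: eqP => ?; lia.
    by rewrite scale0r; apply: spanF0.
  have -> : (2 + j)%N%:Z + (2%:Z - k%:Z) = 2%:Z - (k - j - 2)%N%:Z by lia.
  have -> : L (2%:Z - (k - j - 2)%N%:Z) w =
    vlam (fun n => L n : V -> V) J ((k - j - 2)%N :: lam) by [].
  have hpos : all (fun k => 0 < k)%N ((k - j - 2)%N :: lam).
    by apply/andP; split; [lia | exact: hlam].
  apply: (spanF_le _ (reorder J hvir hd hpos)).
  rewrite !degp_cons /qd /partdeg; do ! case: eqP => ?; lia.
case: ifP => hc; last by rewrite scale0r; apply: spanF0.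
apply: spanFZ; apply: (spanF_le _ hw).
move/eqP: hc => hc.
rewrite degp_cons /qd /partdeg; do ! case: eqP => ?; lia.
Qed.

Lemma Ltil_span (V : lmodType CC) (L : int -> {linear V -> V}) cc J L2 L3 L4
  (hvir : virasoro_rel (fun n => L n : V -> V) cc)
  (hwh : whittaker2 (fun n => L n : V -> V) J L2 L3 L4) delta
  (hd : (1 <= delta <= 2)%N) (h3 : delta = 2%N -> L3 = 0) j d v :
  (0 < j)%N -> spanF (fun n => L n : V -> V) J delta d v ->
  spanF (fun n => L n : V -> V) J delta (d - partdeg delta j)
    (Ltil (fun n => L n : V -> V) L3 L4 (2 + j) v).
Proof.
move=> hj [ps [hps ->]].
rewrite /Ltil linear_sum scaler_sumr -sumrB; apply: spanF_sum => p hp.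
rewrite linearZ /= scalerA mulrC -scalerA -scalerBr; apply: spanFZ.
have /andP[/andP[hs hpos] hdeg] := allP hps p hp.
apply: (spanF_le _ (mainC hvir hwh hd h3 hpos j)).
have -> : qd delta j = partdeg delta j by rewrite /qd; case: eqP => //; lia.
by rewrite lerD2r.
Qed.

Lemma Lmu_span (V : lmodType CC) (L : int -> {linear V -> V}) cc J L2 L3 L4
  (hvir : virasoro_rel (fun n => L n : V -> V) cc)
  (hwh : whittaker2 (fun n => L n : V -> V) J L2 L3 L4) delta
  (hd : (1 <= delta <= 2)%N) (h3 : delta = 2%N -> L3 = 0) :
  forall mu, all (fun k => 0 < k)%N mu -> forall d v,
  spanF (fun n => L n : V -> V) J delta d v ->
  spanF (fun n => L n : V -> V) J delta (d - degp delta mu)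
    (Ltilmu (fun n => L n : V -> V) L3 L4 mu v).
Proof.
elim=> [|k mu IH].
  by move=> _ d v; rewrite /degp big_nil subr0.
move=> /andP[hk hmu] d v hv.
have -> : Ltilmu (fun n => L n : V -> V) L3 L4 (k :: mu) v =
  Ltil (fun n => L n : V -> V) L3 L4 (2 + k) (Ltilmu (fun n => L n : V -> V) L3 L4 mu v).
  by rewrite /= addnC.
apply: (spanF_le _ (Ltil_span hvir hwh hd h3 hk (IH hmu d v hv))).
by rewrite degp_cons; lia.
Qed.

Theorem lemmaA8
  (L2 L3 L4 cc : CC) (hL4 : L4 != 0)
  (V : lmodType CC) (L : int -> {linear V -> V}) (J : V)
  (hvir : virasoro_rel (fun n => L n : V -> V) cc)
  (hwh : whittaker2 (fun n => L n : V -> V) J L2 L3 L4)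
  (hbasis : vlam_basis (fun n => L n : V -> V) J)
  (delta : nat) (hdelta : delta = 1%N \/ (delta = 2%N /\ L3 = 0)) :
  (forall (lam : seq nat) (j : nat), is_partition lam -> (1 <= j)%N ->
     Ltil (fun n => L n : V -> V) L3 L4 (2 + j) (vlam (fun n => L n : V -> V) J lam) != 0 ->
     deg_le (fun n => L n : V -> V) J delta
       (Ltil (fun n => L n : V -> V) L3 L4 (2 + j) (vlam (fun n => L n : V -> V) J lam))
       (degp delta lam - partdeg delta j))
  /\
  (forall lam mu : seq nat, is_partition lam -> is_partition mu ->
     degp delta lam < degp delta mu ->
     Ltilmu (fun n => L n : V -> V) L3 L4 mu (vlam (fun n => L n : V -> V) J lam) = 0).
Proof.
have hd : (1 <= delta <= 2)%N by case: hdelta => [->|[-> _]].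
have h3 : delta = 2%N -> L3 = 0 by case: hdelta => [->|[_ ->]].
split.
  move=> lam j /andP[_ hpos] hj _.
  apply: deg_le_of_spanF; first exact: hbasis.2.
  have := mainC hvir hwh hd h3 hpos j.
  have -> : qd delta j = partdeg delta j by rewrite /qd; case: eqP => //; lia.
  by [].
move=> lam mu hlam /andP[_ hmu] hlt.
apply: (@spanF_neg _ _ J delta (degp delta lam - degp delta mu)).
  by rewrite subr_lt0.
apply: (Lmu_span hvir hwh hd h3 hmu).
exact: spanF_vlam.
Qed.
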